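(* Let $X$ and $Y$ be $\mathbb{N}$-valued random variables with $P\{X=0\}\ne1$, $P\{Y=0\}\neq 1$ and $\mathbb{E}[X^r+Y^r]<+\infty$ for some $r\in(1,2]$, and set $\alpha_r=\mathbb{E}[X]^r+\mathbb{E}[Y]^r-1$. Let $f^{(1)}_t$ and $f^{(2)}_t$ be the solutions of the kinetic equation (defined in the context) with initial probability densities $f_0^{(1)}$ and $f_0^{(2)}$ on $\mathbb{N}$ such that $\sum_v vf_0^{(1)}(v)=\sum_v vf_0^{(2)}(v)=m_0$. Then for every $t>0$ $$d_r(f_t^{(1)},f_t^{(2)})\le d_r(f_0^{(1)},f_0^{(2)})\,e^{\alpha_r t}\quad\text{and}\quad d_r^*(f_t^{(1)},f_t^{(2)})\le d_r^*(f_0^{(1)},f_0^{(2)})\,e^{\alpha_r t}.$$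
   Context: For a probability density $f$ on $\mathbb{N}$, $\hat f(z)=\sum_{v\ge0}z^vf(v)$ ($z\in[0,1]$) is its probability generating function and $\tilde f(\xi)=\sum_{v\ge0}e^{-\xi v}f(v)$ ($\xi>0$) its Laplace transform. Let $\hat p_X(z)=\mathbb{E}[z^X]$, $\hat p_Y(z)=\mathbb{E}[z^Y]$. The kinetic equation is $\partial_t f_t(v)=Q^+(f_t,f_t)(v)-f_t(v)$ on $\mathbb{N}$, where $Q^+(f,g)(v)=P\{\sum_{i=1}^{V_1}Y_i+\sum_{i=1}^{V_2}X_i=v\}$, $V_1\sim f$, $V_2\sim g$, $X_i$ i.i.d. $\sim X$, $Y_i$ i.i.d. $\sim Y$, all independent; equivalently $\partial_t\hat f_t(z)=\hat f_t(\hat p_X(z))\hat f_t(\hat p_Y(z))-\hat f_t(z)$, $z\in[0,1]$, which has a unique global solution for each initial probability density. The metrics are $$d_r(f,g)=\sup_{z\in(0,1)}\frac{|\hat f(z)-\hat g(z)|}{|1-z|^r},\qquad d_r^*(f,g)=\sup_{\xi>0}\frac{|\tilde f(\xi)-\tilde g(\xi)|}{\xi^r}.$$ *)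

(* Defs.v *)
From Stdlib Require Import Reals.
From Coquelicot Require Import Coquelicot.
Open Scope R_scope.

(* x^r for x >= 0 and real r > 0, with the convention 0^r = 0
   (Stdlib's Rpower 0 r would give 1). *)
Definition rpow (x r : R) : R := if Rle_dec x 0 then 0 else Rpower x r.

Definition is_pdens (f : nat -> R) : Prop :=
  (forall v, 0 <= f v) /\ is_series f 1.

Definition pgf (f : nat -> R) (z : R) : R := Series (fun v => z ^ v * f v).

Definition laplace (f : nat -> R) (xi : R) : R :=
  Series (fun v => exp (- xi * INR v) * f v).

Definition mean (f : nat -> R) : R := Series (fun v => INR v * f v).

Definition finite_rmoment (f : nat -> R) (r : R) : Prop :=
  ex_series (fun v => rpow (INR v) r * f v).

Definition d_r (r : R) (f g : nat -> R) : Rbar :=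
  Lub_Rbar (fun x => exists z, 0 < z < 1 /\
     x = Rabs (pgf f z - pgf g z) / rpow (Rabs (1 - z)) r).

Definition d_r_star (r : R) (f g : nat -> R) : Rbar :=
  Lub_Rbar (fun x => exists xi, 0 < xi /\
     x = Rabs (laplace f xi - laplace g xi) / rpow xi r).

(* f : time -> density is the (classical) solution on [0,+oo) of the kinetic
   equation  d/dt hat f_t(z) = hat f_t(hat p_X(z)) hat f_t(hat p_Y(z)) - hat f_t(z),
   z in [0,1], with initial datum f0; pX, pY are the laws of X and Y. *)
Definition kinetic_solution (pX pY f0 : nat -> R) (f : R -> nat -> R) : Prop :=
  (forall v, f 0 v = f0 v) /\
  (forall t, 0 <= t -> is_pdens (f t)) /\
  (forall z, 0 <= z <= 1 ->
     (forall t, 0 < t ->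
        is_derive (fun s => pgf (f s) z) t
          (pgf (f t) (pgf pX z) * pgf (f t) (pgf pY z) - pgf (f t) z)) /\
     filterlim (fun s => pgf (f s) z) (at_right 0) (locally (pgf f0 z))).

(* Main.v *)
Require Import Defs.
From Stdlib Require Import Reals Lra Lia.
From Coquelicot Require Import Coquelicot.
Open Scope R_scope.

Lemma ser_scal (a : nat -> R) c l : is_series a l -> is_series (fun n => c * a n) (c * l).
Proof. intro H. exact (is_series_scal_l c a l H). Qed.

Lemma ser_plus (a b : nat -> R) la lb : is_series a la -> is_series b lb ->
  is_series (fun n => a n + b n) (la + lb).
Proof. intros Ha Hb. exact (is_series_plus a b la lb Ha Hb). Qed.

Lemma ser_minus (a b : nat -> R) la lb : is_series a la -> is_series b lb ->
  is_series (fun n => a n - b n) (la - lb).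
Proof. intros Ha Hb. exact (is_series_minus a b la lb Ha Hb). Qed.

Lemma ser_ge0 (a : nat -> R) l : is_series a l -> (forall n, 0 <= a n) -> 0 <= l.
Proof.
  intros Ha H.
  assert (H0 : is_series (fun n => 0 * a n) (0 * l)) by (apply ser_scal; auto).
  rewrite <- (is_series_unique _ _ Ha).
  replace 0 with (Series (fun n => 0 * a n)) at 1.
  2:{ rewrite (is_series_unique _ _ H0); ring. }
  apply Series_le. intros n; split; [lra| rewrite Rmult_0_l; auto]. eexists; eauto.
Qed.

Lemma ser_le (a b : nat -> R) la lb : is_series a la -> is_series b lb ->
  (forall n, a n <= b n) -> la <= lb.
Proof.
  intros Ha Hb H. assert (0 <= lb - la); [|lra].
  apply (ser_ge0 (fun n => b n - a n)). apply ser_minus; auto.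
  intros n; specialize (H n); lra.
Qed.

Lemma pow_le1 y n : 0 <= y <= 1 -> y ^ n <= 1.
Proof. intro H. induction n; simpl; [lra|]. assert (0 <= y ^ n) by (apply pow_le; lra). nra. Qed.

Lemma pgf_series p y : is_pdens p -> 0 <= y <= 1 ->
  is_series (fun v => y ^ v * p v) (pgf p y).
Proof.
  intros [Hp Hs] Hy. apply Series_correct.
  apply (@ex_series_le R_AbsRing R_CompleteNormedModule _ p). 2: eexists; eauto.
  intros n. change (norm (y ^ n * p n)) with (Rabs (y ^ n * p n)).
  assert (0 <= y ^ n <= 1) by (split; [apply pow_le; lra | apply pow_le1; lra]).
  specialize (Hp n). rewrite Rabs_pos_eq by nra. nra.
Qed.

Lemma pgf_bnd p y : is_pdens p -> 0 <= y <= 1 -> 0 <= pgf p y <= 1.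
Proof.
  intros Hd Hy. pose proof (pgf_series p y Hd Hy) as H. destruct Hd as [Hp Hs].
  assert (forall n, 0 <= y ^ n <= 1) by (intro n; split; [apply pow_le; lra | apply pow_le1; lra]).
  split.
  - apply (ser_ge0 _ _ H). intro n. specialize (Hp n); specialize (H0 n); nra.
  - apply (ser_le _ _ _ _ H Hs). intro n. specialize (Hp n); specialize (H0 n); nra.
Qed.

Lemma bernoulli z (v : nat) : 0 <= z <= 1 -> 1 - INR v * (1 - z) <= z ^ v.
Proof.
  intro Hz. induction v.
  - simpl; lra.
  - rewrite S_INR. simpl. assert (0 <= INR v) by apply pos_INR.
    assert (z * (1 - INR v * (1 - z)) <= z * z ^ v) by (apply Rmult_le_compat_l; lra).
    assert (0 <= INR v * ((1 - z) * (1 - z))) by (apply Rmult_le_pos; nra). nra.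
Qed.

Lemma pgf_props p mu z : is_pdens p -> p 0%nat <> 1 ->
  is_series (fun v => INR v * p v) mu -> 0 < z < 1 ->
  0 < pgf p z < 1 /\ 1 - pgf p z <= mu * (1 - z) /\ exp (mu * ln z) <= pgf p z.
Proof.
  intros Hd H0 Hm Hz.
  pose proof (pgf_series p z Hd ltac:(lra)) as Hs. pose proof Hd as [Hp Hone].
  assert (Hj : exp (mu * ln z) <= pgf p z).
  { set (L := ln z). set (E := exp (mu * L)).
    assert (HS : is_series (fun v => E * (p v + L * (INR v * p v) - L * mu * p v))
                  (E * (1 + L * mu - L * mu * 1))).
    { apply ser_scal. apply ser_minus. apply ser_plus; auto. apply ser_scal; auto.
      apply ser_scal; auto. }
    replace E with (E * (1 + L * mu - L * mu * 1)) by ring.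
    apply (ser_le _ _ _ _ HS Hs). intro v.
    rewrite <- (Rpower_pow v z) by lra. unfold Rpower. fold L.
    replace (INR v * L) with (mu * L + (INR v - mu) * L) by ring.
    rewrite exp_plus. fold E. pose proof (exp_ineq1_le ((INR v - mu) * L)).
    assert (0 < E) by apply exp_pos. specialize (Hp v).
    assert (0 <= E * p v) by (apply Rmult_le_pos; lra).
    assert (E * p v * (1 + (INR v - mu) * L) <= E * p v * exp ((INR v - mu) * L)) by (apply Rmult_le_compat_l; lra).
    nra. }
  assert (Hb : 1 - pgf p z <= mu * (1 - z)).
  { assert (HS : is_series (fun v => p v - (1 - z) * (INR v * p v)) (1 - (1 - z) * mu)).
    { apply ser_minus; auto. apply ser_scal; auto. }
    assert (1 - (1 - z) * mu <= pgf p z); [|lra].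
    apply (ser_le _ _ _ _ HS Hs). intro v. pose proof (bernoulli z v ltac:(lra)).
    specialize (Hp v). nra. }
  assert (Hpos : 0 < pgf p z) by (pose proof (exp_pos (mu * ln z)); lra).
  assert (Hlt : pgf p z < 1).
  { assert (H1 : is_series (fun k => p (S k)) (1 - p 0%nat)).
    { apply is_series_incr_1. change (plus (1 - p 0%nat) (p 0%nat)) with (1 - p 0%nat + p 0%nat).
      replace (1 - p 0%nat + p 0%nat) with 1 by ring. exact Hone. }
    assert (H2 : is_series (fun k => z ^ (S k) * p (S k)) (pgf p z - p 0%nat)).
    { apply (is_series_incr_1 (fun v => z ^ v * p v)).
      change (plus (pgf p z - p 0%nat) (z ^ 0 * p 0%nat)) with (pgf p z - p 0%nat + z ^ 0 * p 0%nat).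
      replace (pgf p z - p 0%nat + z ^ 0 * p 0%nat) with (pgf p z) by (simpl; ring). exact Hs. }
    assert (H3 : is_series (fun k => z * p (S k)) (z * (1 - p 0%nat))) by (apply ser_scal; auto).
    assert (pgf p z - p 0%nat <= z * (1 - p 0%nat)).
    { apply (ser_le _ _ _ _ H2 H3). intro k. simpl.
      assert (z ^ k <= 1) by (apply pow_le1; lra). specialize (Hp (S k)).
      assert (0 <= z * p (S k)) by (apply Rmult_le_pos; lra).
      assert (z ^ k * (z * p (S k)) <= 1 * (z * p (S k))) by (apply Rmult_le_compat_r; lra). nra. }
    assert (0 <= 1 - p 0%nat) by (apply (ser_ge0 _ _ H1); intro; auto).
    assert (1 - p 0%nat <> 0) by (intro; apply H0; lra).
    nra. }
  auto.
Qed.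

Lemma deriv_g A C1 C2 n u : is_derive (fun u => C1 * exp (A*u) + C2 * (2*u)^(S n) / INR (Factorial.fact (S n))) u (C1*A*exp(A* u) + 2*C2*(2*u)^n / INR(Factorial.fact n)).
Proof.
intros. auto_derive. auto.
change (match n with 0%nat => 1 | S _ => INR n + 1 end) with (INR (S n)).
replace (INR (Factorial.fact n + n * Factorial.fact n)) with (INR (S n) * INR (Factorial.fact n)) by (rewrite <- mult_INR; f_equal).
pose proof (INR_fact_neq_0 n). assert (INR (S n) <> 0) by (apply not_0_INR; lia).
field; auto.
Qed.

Lemma mvt_cmp (f g f' g' : R -> R) lo hi : lo < hi ->
  (forall x, lo <= x <= hi -> is_derive f x (f' x) /\ is_derive g x (g' x)) ->
  (forall x, lo <= x <= hi -> Rabs (f' x) <= g' x) ->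
  Rabs (f hi - f lo) <= g hi - g lo.
Proof.
  intros Hlt Hd Hb.
  assert (Hm : Rmin lo hi = lo) by (apply Rmin_left; lra).
  assert (HM : Rmax lo hi = hi) by (apply Rmax_right; lra).
  assert (K1 : forall (h h' : R -> R), (forall x, lo <= x <= hi -> is_derive h x (h' x)) ->
             (forall x, lo <= x <= hi -> h' x <= 0) -> h hi - h lo <= 0).
  { intros h h' Hh Hh'.
    destruct (MVT_gen h lo hi h') as [c [Hc Heq]].
    - rewrite Hm, HM. intros x Hx. apply Hh; lra.
    - rewrite Hm, HM. intros x Hx. apply continuity_pt_filterlim.
      apply (ex_derive_continuous h). exists (h' x). apply Hh; lra.
    - rewrite Hm, HM in Hc. rewrite Heq. specialize (Hh' c Hc). nra. }
  assert (A1 : (fun x => f x - g x) hi - (fun x => f x - g x) lo <= 0).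
  { apply (K1 (fun x => f x - g x) (fun x => f' x - g' x)).
    - intros x Hx. destruct (Hd x Hx) as [H1 H2]. exact (is_derive_minus _ _ x _ _ H1 H2).
    - intros x Hx. specialize (Hb x Hx). pose proof (Rle_abs (f' x)). lra. }
  assert (A2 : (fun x => - f x - g x) hi - (fun x => - f x - g x) lo <= 0).
  { apply (K1 (fun x => - f x - g x) (fun x => - f' x - g' x)).
    - intros x Hx. destruct (Hd x Hx) as [H1 H2].
      exact (is_derive_minus _ _ x _ _ (is_derive_opp _ x _ H1) H2).
    - intros x Hx. specialize (Hb x Hx). pose proof (Rle_abs (- f' x)). rewrite Rabs_Ropp in H. lra. }
  simpl in A1, A2. apply Rabs_le. lra.
Qed.

Lemma lim_cmp (phi : R -> R) l s B : 0 < s ->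
  filterlim phi (at_right 0) (locally l) ->
  (forall e, 0 < e < s -> Rabs (phi s - phi e) <= B) -> Rabs (phi s - l) <= B.
Proof.
  intros Hs Hl Hb. destruct (Rle_or_lt (Rabs (phi s - l)) B) as [H|H]; auto.
  exfalso. set (d := Rabs (phi s - l) - B). assert (Hd : 0 < d) by (unfold d; lra).
  pose proof (proj1 (filterlim_locally phi l) Hl (mkposreal d Hd)) as E1.
  assert (E2 : at_right 0 (fun y => 0 < y < s)).
  { exists (mkposreal s Hs). intros y Hy Hy0. split; auto.
    unfold ball in Hy; simpl in Hy; unfold AbsRing_ball, abs, minus, plus, opp in Hy; simpl in Hy.
    apply Rabs_def2 in Hy. lra. }
  destruct (Hierarchy.filter_ex _ (filter_and _ _ E1 E2)) as [y [Hy1 Hy2]].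
  unfold ball in Hy1; simpl in Hy1; unfold AbsRing_ball, abs, minus, plus, opp in Hy1; simpl in Hy1.
  specialize (Hb y Hy2).
  pose proof (Rabs_triang (phi s - phi y) (phi y - l)).
  replace (phi s - phi y + (phi y - l)) with (phi s - l) in H0 by ring.
  unfold d in Hy1. replace (phi y + - l) with (phi y - l) in Hy1 by ring. lra.
Qed.
Lemma lim_phi (F1 F2 : R -> R -> R) z :
  filterlim (fun u => F1 u z) (at_right 0) (locally (F1 0 z)) ->
  filterlim (fun u => F2 u z) (at_right 0) (locally (F2 0 z)) ->
  filterlim (fun u => exp u * (F1 u z - F2 u z)) (at_right 0) (locally (exp 0 * (F1 0 z - F2 0 z))).
Proof.
  intros H1 H2.
  apply (filterlim_comp_2 (G := locally (exp 0)) (H := locally (F1 0 z - F2 0 z)) exp (fun u => F1 u z - F2 u z) Rmult).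
  - apply (filterlim_filter_le_1 _ (@filter_le_within R (locally 0) _ (fun x => 0 < x))). apply continuous_exp.
  - apply (filterlim_comp_2 (G := locally (F1 0 z)) (H := locally (- F2 0 z)) (fun u => F1 u z) (fun u => - F2 u z) Rplus); [exact H1| |].
    + eapply filterlim_comp; [exact H2| apply (filterlim_opp (F2 0 z))].
    + apply (filterlim_plus (F1 0 z) (- F2 0 z)).
  - apply (filterlim_mult (exp 0) (F1 0 z - F2 0 z)).
Qed.

Lemma is_derive_eq (f : R -> R) x l l' : is_derive f x l -> l = l' -> is_derive f x l'.
Proof. intros H E; subst; exact H. Qed.

Lemma core (F1 F2 : R -> R -> R) (a b w : R -> R) (K cX cY : R) :
  0 <= K -> 0 <= cX -> 0 <= cY ->
  (forall z, 0 < z < 1 -> (0 < a z < 1) /\ (0 < b z < 1)) ->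
  (forall z, 0 < z < 1 -> 0 <= w z /\ w (a z) <= cX * w z /\ w (b z) <= cY * w z) ->
  (forall s y, 0 <= s -> 0 <= y <= 1 -> Rabs (F1 s y) <= 1 /\ Rabs (F2 s y) <= 1) ->
  (forall z, 0 < z < 1 -> forall s, 0 < s ->
     is_derive (fun u => F1 u z) s (F1 s (a z) * F1 s (b z) - F1 s z) /\
     is_derive (fun u => F2 u z) s (F2 s (a z) * F2 s (b z) - F2 s z)) ->
  (forall z, 0 < z < 1 ->
     filterlim (fun u => F1 u z) (at_right 0) (locally (F1 0 z)) /\
     filterlim (fun u => F2 u z) (at_right 0) (locally (F2 0 z))) ->
  (forall z, 0 < z < 1 -> Rabs (F1 0 z - F2 0 z) <= K * w z) ->
  forall t, 0 < t -> forall z, 0 < z < 1 ->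
    Rabs (F1 t z - F2 t z) <= K * w z * exp ((cX + cY - 1) * t).
Proof.
  intros Hk HcX HcY Hab Hw HF Hder Hlim H0 t Ht.
  set (A := cX + cY).
  set (phi := fun s z => exp s * (F1 s z - F2 s z)).
  set (C := 2 * exp t).
  assert (HC : 0 < C) by (unfold C; pose proof (exp_pos t); lra).
  assert (Hphi_d : forall z, 0<z<1 -> forall s, 0<s ->
     is_derive (fun u => phi u z) s (exp s * (F1 s (a z) * F1 s (b z) - F2 s (a z) * F2 s (b z)))).
  { intros z Hz s Hs. destruct (Hder z Hz s Hs) as [D1 D2].
    assert (HE : is_derive exp s (exp s)) by (apply is_derive_Reals; apply derivable_pt_lim_exp).
    pose proof (is_derive_mult _ _ s _ _ HE (is_derive_minus _ _ s _ _ D1 D2) Rmult_comm) as HM.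
    unfold phi. eapply (is_derive_eq _ _ _ _ HM).
    unfold minus, opp, plus, mult; simpl. ring. }
  assert (IH : forall n s z, 0 <= s <= t -> 0 < z < 1 ->
     Rabs (phi s z) <= K * w z * exp (A * s) + C * (2 * s) ^ n / INR (Factorial.fact n)).
  { induction n as [|n IHn]; intros s z Hs Hz.
    - unfold phi. destruct (Hab z Hz) as [_ _]. destruct (HF s z ltac:(lra) ltac:(lra)) as [B1 B2].
      destruct (Hw z Hz) as [Hw0 _].
      simpl. rewrite Rabs_mult, Rabs_pos_eq by (apply Rlt_le, exp_pos).
      pose proof (Rabs_triang (F1 s z) (- F2 s z)). rewrite Rabs_Ropp in H.
      assert (exp s <= exp t) by (destruct (Rle_lt_or_eq_dec s t (proj2 Hs)) as [h|h]; [apply Rlt_le, exp_increasing; exact h | rewrite h; lra]).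
      assert (0 <= K * w z * exp (A * s)) by (apply Rmult_le_pos; [apply Rmult_le_pos; lra| apply Rlt_le, exp_pos]).
      unfold C. replace (2 * exp t * 1 / 1) with (2 * exp t) by field.
      assert (Rabs (F1 s z - F2 s z) <= 2) by (unfold Rminus; lra).
      pose proof (exp_pos s). nra.
    - assert (Hw0 : 0 <= w z) by apply (Hw z Hz).
      assert (HKw : 0 <= K * w z) by (apply Rmult_le_pos; lra).
      assert (HA : 0 <= A) by (unfold A; lra).
      assert (Hfact : forall m, 0 < INR (Factorial.fact m)) by (intro m; apply INR_fact_lt_0).
      set (g := fun u => K * w z * exp (A * u) + C * (2 * u) ^ (S n) / INR (Factorial.fact (S n))).
      assert (Hg0 : g 0 = K * w z).
      { unfold g. rewrite Rmult_0_r, exp_0, Rmult_0_r, pow_i by lia. field. apply Rgt_not_eq, Hfact. }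
      assert (Hgm : forall e, 0 <= e -> g 0 <= g e).
      { intros e He. rewrite Hg0. unfold g.
        assert (1 <= exp (A * e)) by (pose proof (exp_ineq1_le (A * e)); nra).
        assert (0 <= C * (2 * e) ^ S n / INR (Factorial.fact (S n))).
        { unfold Rdiv. apply Rmult_le_pos; [apply Rmult_le_pos; [lra| apply pow_le; lra]|].
          apply Rlt_le, Rinv_0_lt_compat, Hfact. }
        nra. }
      assert (Hgoal0 : Rabs (phi 0 z) <= g 0).
      { rewrite Hg0. unfold phi. rewrite exp_0, Rmult_1_l. apply H0; auto. }
      destruct (Rle_lt_or_eq_dec 0 s (proj1 Hs)) as [Hs0|Hs0].
      2:{ subst s. rewrite Rmult_0_r, exp_0, Rmult_0_r, pow_i by lia.
          replace (K * w z * 1 + C * 0 / INR (Factorial.fact (S n))) with (g 0).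
          exact Hgoal0. rewrite Hg0. field. apply Rgt_not_eq, Hfact. }
      assert (Hmain : forall e, 0 < e < s -> Rabs (phi s z - phi e z) <= g s - g 0).
      { intros e He.
        assert (Rabs (phi s z - phi e z) <= g s - g e); [|pose proof (Hgm e ltac:(lra)); lra].
        apply (mvt_cmp (fun u => phi u z) g
                 (fun c => exp c * (F1 c (a z) * F1 c (b z) - F2 c (a z) * F2 c (b z)))
                 (fun c => K * w z * A * exp (A * c) + 2 * C * (2 * c) ^ n / INR (Factorial.fact n))).
        - lra.
        - intros x Hx. split. apply Hphi_d; auto; lra. apply deriv_g.
        - intros c Hc. destruct (Hab z Hz) as [Ha Hb].
          destruct (Hw z Hz) as [_ [Hwa Hwb]].
          destruct (HF c (b z) ltac:(lra) ltac:(lra)) as [Fb1 _].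
          destruct (HF c (a z) ltac:(lra) ltac:(lra)) as [_ Fa2].
          pose proof (IHn c (a z) ltac:(lra) Ha) as Ia.
          pose proof (IHn c (b z) ltac:(lra) Hb) as Ib.
          replace (exp c * (F1 c (a z) * F1 c (b z) - F2 c (a z) * F2 c (b z)))
            with (phi c (a z) * F1 c (b z) + F2 c (a z) * phi c (b z)) by (unfold phi; ring).
          eapply Rle_trans; [apply Rabs_triang|]. rewrite !Rabs_mult.
          assert (Rabs (phi c (a z)) * Rabs (F1 c (b z)) <= Rabs (phi c (a z))).
          { pose proof (Rabs_pos (phi c (a z))). pose proof (Rabs_pos (F1 c (b z))). nra. }
          assert (Rabs (F2 c (a z)) * Rabs (phi c (b z)) <= Rabs (phi c (b z))).
          { pose proof (Rabs_pos (phi c (b z))). pose proof (Rabs_pos (F2 c (a z))). nra. }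
          assert (HE : 0 <= exp (A * c)) by apply Rlt_le, exp_pos.
          assert (K * w (a z) * exp (A * c) <= K * (cX * w z) * exp (A * c)).
          { apply Rmult_le_compat_r; auto. apply Rmult_le_compat_l; auto. }
          assert (K * w (b z) * exp (A * c) <= K * (cY * w z) * exp (A * c)).
          { apply Rmult_le_compat_r; auto. apply Rmult_le_compat_l; auto. }
          replace (K * w z * A * exp (A * c)) with (K * (cX * w z) * exp (A * c) + K * (cY * w z) * exp (A * c)) by (unfold A; ring).
          lra. }
      pose proof (Hlim z Hz) as [L1 L2].
      pose proof (lim_cmp (fun u => phi u z) (phi 0 z) s (g s - g 0) Hs0 (lim_phi F1 F2 z L1 L2) Hmain) as Hl.
      pose proof (Rabs_triang (phi s z - phi 0 z) (phi 0 z)).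
      replace (phi s z - phi 0 z + phi 0 z) with (phi s z) in H by ring.
      change (Rabs (phi s z) <= g s).
      lra. }
  intros z Hz.
  assert (Hw0 : 0 <= w z) by apply (Hw z Hz).
  assert (Hlim2 : Rabs (phi t z) <= K * w z * exp (A * t)).
  { destruct (Rle_or_lt (Rabs (phi t z)) (K * w z * exp (A * t))) as [h|h]; auto. exfalso.
    set (d := Rabs (phi t z) - K * w z * exp (A * t)).
    assert (Hd : 0 < d / C) by (unfold d; apply Rdiv_lt_0_compat; lra).
    destruct (cv_speed_pow_fact (2 * t) (d / C) Hd) as [N HN].
    specialize (HN N (le_n N)). unfold R_dist in HN. rewrite Rminus_0_r in HN.
    pose proof (IH N t z ltac:(lra) Hz) as HI.
    assert (0 <= (2 * t) ^ N / INR (Factorial.fact N)).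
    { unfold Rdiv. apply Rmult_le_pos. apply pow_le; lra. apply Rlt_le, Rinv_0_lt_compat, INR_fact_lt_0. }
    rewrite Rabs_pos_eq in HN by auto.
    assert (C * ((2 * t) ^ N / INR (Factorial.fact N)) < C * (d / C)) by (apply Rmult_lt_compat_l; auto).
    replace (C * (d / C)) with d in H1 by (field; lra).
    unfold d in H1. unfold Rdiv in *. nra. }
  unfold phi in Hlim2. rewrite Rabs_mult, Rabs_pos_eq in Hlim2 by (apply Rlt_le, exp_pos).
  replace (A * t) with ((cX + cY - 1) * t + t) in Hlim2 by (unfold A; ring).
  rewrite exp_plus in Hlim2.
  apply (Rmult_le_reg_l (exp t)). apply exp_pos. unfold A. replace (exp t * (K * w z * exp ((cX + cY - 1) * t))) with (K * w z * (exp ((cX + cY - 1) * t) * exp t)) by ring. exact Hlim2.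
Qed.

Lemma rpow_nonneg x r : 0 <= rpow x r.
Proof. unfold rpow. destruct (Rle_dec x 0); [lra|]. apply Rlt_le, exp_pos. Qed.

Lemma rpow_pos x r : 0 < x -> 0 < rpow x r.
Proof. intro. unfold rpow. destruct (Rle_dec x 0); [lra|]. apply exp_pos. Qed.

Lemma rpow_bound x y m r : 0 < x -> 0 < y -> x <= m * y -> 0 < r ->
  rpow x r <= rpow m r * rpow y r.
Proof.
  intros Hx Hy Hxy Hr.
  assert (Hm : 0 < m).
  { destruct (Rle_or_lt m 0); auto. assert (m * y <= 0) by nra. lra. }
  unfold rpow. destruct (Rle_dec x 0); [lra|]. destruct (Rle_dec m 0); [lra|].
  destruct (Rle_dec y 0); [lra|].
  rewrite Rpower_mult_distr by auto. apply Rle_Rpower_l; lra.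
Qed.

Lemma mean_series p r : is_pdens p -> 1 < r -> finite_rmoment p r ->
  is_series (fun v => INR v * p v) (mean p).
Proof.
  intros [Hp _] Hr Hm. apply Series_correct.
  apply (@ex_series_le R_AbsRing R_CompleteNormedModule _ (fun v => rpow (INR v) r * p v)); [|exact Hm].
  intro n. change (norm (INR n * p n)) with (Rabs (INR n * p n)).
  specialize (Hp n). rewrite Rabs_pos_eq by (apply Rmult_le_pos; auto; apply pos_INR).
  destruct n as [|n].
  - simpl. unfold rpow. destruct (Rle_dec 0 0); [lra|]. lra.
  - assert (H1 : 1 <= INR (S n)) by (rewrite S_INR; pose proof (pos_INR n); lra).
    unfold rpow. destruct (Rle_dec (INR (S n)) 0); [lra|].
    apply Rmult_le_compat_r; auto.
    rewrite <- (Rpower_1 (INR (S n))) at 1 by lra. apply Rle_Rpower; lra.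
Qed.

Lemma laplace_pgf f xi : laplace f xi = pgf f (exp (- xi)).
Proof.
  unfold laplace, pgf. apply Series_ext. intro v.
  rewrite <- Rpower_pow by apply exp_pos. unfold Rpower. rewrite ln_exp.
  f_equal. f_equal. ring.
Qed.

Lemma rbar_mult_pinf x : 0 < x -> Rbar_mult p_infty x = p_infty.
Proof.
  intro H. simpl. destruct (Rle_dec 0 x); [|lra].
  destruct (Rle_lt_or_eq_dec 0 x r); [reflexivity|lra].
Qed.

Lemma lub_le (E : R -> Prop) (M : R) : (forall x, E x -> x <= M) -> Rbar_le (Lub_Rbar E) M.
Proof. intro H. destruct (Lub_Rbar_correct E) as [_ H2]. apply H2. intros x Hx. simpl. auto. Qed.

Lemma lub_ge (E : R -> Prop) x : E x -> Rbar_le x (Lub_Rbar E).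
Proof. intro H. destruct (Lub_Rbar_correct E) as [H1 _]. apply H1. auto. Qed.

Lemma sup_step (E Et : R -> Prop) (w : R -> R) (h0 ht : R -> R) (e : R) :
  0 < e ->
  (forall z, 0 < z < 1 -> 0 < w z) ->
  (forall x, E x <-> exists z, 0 < z < 1 /\ x = Rabs (h0 z) / w z) ->
  (forall x, Et x <-> exists z, 0 < z < 1 /\ x = Rabs (ht z) / w z) ->
  (forall K, 0 <= K -> (forall z, 0 < z < 1 -> Rabs (h0 z) <= K * w z) ->
      forall z, 0 < z < 1 -> Rabs (ht z) <= K * w z * e) ->
  Rbar_le (Lub_Rbar Et) (Rbar_mult (Lub_Rbar E) e).
Proof.
  intros He Hw HE HEt Hcore.
  assert (Hin : E (Rabs (h0 (/2)) / w (/2))) by (apply HE; exists (/2); split; [lra|auto]).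
  pose proof (lub_ge E _ Hin) as Hge.
  assert (Hx0 : 0 <= Rabs (h0 (/2)) / w (/2)).
  { apply Rmult_le_pos. apply Rabs_pos. apply Rlt_le, Rinv_0_lt_compat, Hw; lra. }
  destruct (Lub_Rbar E) as [K| |] eqn:HK.
  - simpl in Hge. simpl Rbar_mult.
    assert (HK0 : 0 <= K) by lra.
    assert (H0 : forall z, 0 < z < 1 -> Rabs (h0 z) <= K * w z).
    { intros z Hz. assert (Ez : E (Rabs (h0 z) / w z)) by (apply HE; eauto).
      pose proof (lub_ge E _ Ez) as Hz2. rewrite HK in Hz2. simpl in Hz2.
      pose proof (Hw z Hz). apply (Rmult_le_reg_r (/ w z)). apply Rinv_0_lt_compat; auto.
      replace (K * w z * / w z) with K by (field; lra). exact Hz2. }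
    apply lub_le. intros x Hx. apply HEt in Hx. destruct Hx as [z [Hz ->]].
    pose proof (Hcore K HK0 H0 z Hz). pose proof (Hw z Hz).
    apply (Rmult_le_reg_r (w z)); auto. unfold Rdiv. rewrite Rmult_assoc, Rinv_l by lra.
    nra.
  - rewrite rbar_mult_pinf by auto. destruct (Lub_Rbar Et); simpl; auto.
  - simpl in Hge. contradiction.
Qed.

Lemma pgf_ext f g z : (forall v, f v = g v) -> pgf f z = pgf g z.
Proof. intro H. unfold pgf. apply Series_ext. intro v. rewrite H. auto. Qed.

Lemma core_app (pX pY f01 f02 : nat -> R) (f1 f2 : R -> nat -> R) r (w : R -> R) :
  is_pdens pX -> is_pdens pY -> pX 0%nat <> 1 -> pY 0%nat <> 1 -> 1 < r ->
  finite_rmoment pX r -> finite_rmoment pY r ->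
  kinetic_solution pX pY f01 f1 -> kinetic_solution pX pY f02 f2 ->
  (forall p mu z, is_pdens p -> p 0%nat <> 1 -> is_series (fun v => INR v * p v) mu ->
      0 < z < 1 -> 0 <= w z /\ w (pgf p z) <= rpow mu r * w z) ->
  forall K, 0 <= K -> (forall z, 0 < z < 1 -> Rabs (pgf f01 z - pgf f02 z) <= K * w z) ->
  forall t, 0 < t -> forall z, 0 < z < 1 ->
  Rabs (pgf (f1 t) z - pgf (f2 t) z) <=
    K * w z * exp ((rpow (mean pX) r + rpow (mean pY) r - 1) * t).
Proof.
  intros HX HY HX0 HY0 Hr MX MY [K10 [K1d K1e]] [K20 [K2d K2e]] Hwgen K HK H0 t Ht z Hz.
  pose proof (mean_series pX r HX Hr MX) as SX.
  pose proof (mean_series pY r HY Hr MY) as SY.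
  apply (core (fun s y => pgf (f1 s) y) (fun s y => pgf (f2 s) y) (pgf pX) (pgf pY) w K); auto.
  - apply rpow_nonneg.
  - apply rpow_nonneg.
  - intros y Hy. split.
    + apply (pgf_props pX (mean pX) y); auto.
    + apply (pgf_props pY (mean pY) y); auto.
  - intros y Hy. split; [apply (Hwgen pX (mean pX) y); auto|].
    split; [apply (Hwgen pX (mean pX) y); auto|apply (Hwgen pY (mean pY) y); auto].
  - intros s y Hs Hy. pose proof (pgf_bnd (f1 s) y (K1d s Hs) Hy).
    pose proof (pgf_bnd (f2 s) y (K2d s Hs) Hy).
    rewrite !Rabs_pos_eq by lra. lra.
  - intros y Hy s Hs. split; apply (K1e y ltac:(lra)) || apply (K2e y ltac:(lra)); auto.
  - intros y Hy. rewrite (pgf_ext (f1 0) f01 y K10), (pgf_ext (f2 0) f02 y K20).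
    split; [apply (K1e y ltac:(lra)) | apply (K2e y ltac:(lra))].
  - intros y Hy. rewrite (pgf_ext (f1 0) f01 y K10), (pgf_ext (f2 0) f02 y K20). auto.
Qed.

Lemma w1_ok r : 1 < r -> forall p mu z, is_pdens p -> p 0%nat <> 1 -> is_series (fun v => INR v * p v) mu ->
      0 < z < 1 -> 0 <= rpow (Rabs (1 - z)) r /\ rpow (Rabs (1 - pgf p z)) r <= rpow mu r * rpow (Rabs (1 - z)) r.
Proof.
  intros Hr p mu z Hp H0 Hs Hz. split; [apply rpow_nonneg|].
  destruct (pgf_props p mu z Hp H0 Hs Hz) as [[Ha1 Ha2] [Hb _]].
  rewrite !Rabs_pos_eq by lra. apply rpow_bound; lra.
Qed.

Lemma w2_ok r : 1 < r -> forall p mu z, is_pdens p -> p 0%nat <> 1 -> is_series (fun v => INR v * p v) mu ->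
      0 < z < 1 -> 0 <= rpow (- ln z) r /\ rpow (- ln (pgf p z)) r <= rpow mu r * rpow (- ln z) r.
Proof.
  intros Hr p mu z Hp H0 Hs Hz. split; [apply rpow_nonneg|].
  destruct (pgf_props p mu z Hp H0 Hs Hz) as [[Ha1 Ha2] [_ Hj]].
  assert (ln (pgf p z) < 0) by (rewrite <- ln_1; apply ln_increasing; lra).
  assert (ln z < 0) by (rewrite <- ln_1; apply ln_increasing; lra).
  assert (mu * ln z <= ln (pgf p z)) by (rewrite <- (ln_exp (mu * ln z)); apply ln_le; auto; apply exp_pos).
  apply rpow_bound; lra.
Qed.

Theorem theorem3p2 (pX pY : nat -> R) (r : R) (f01 f02 : nat -> R) (m0 : R)
  (f1 f2 : R -> nat -> R) :
  is_pdens pX -> is_pdens pY ->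
  pX 0%nat <> 1 -> pY 0%nat <> 1 ->
  1 < r <= 2 ->
  finite_rmoment pX r -> finite_rmoment pY r ->
  is_pdens f01 -> is_pdens f02 ->
  is_series (fun v => INR v * f01 v) m0 ->
  is_series (fun v => INR v * f02 v) m0 ->
  kinetic_solution pX pY f01 f1 ->
  kinetic_solution pX pY f02 f2 ->
  let alpha_r := rpow (mean pX) r + rpow (mean pY) r - 1 in
  forall t, 0 < t ->
    Rbar_le (d_r r (f1 t) (f2 t)) (Rbar_mult (d_r r f01 f02) (exp (alpha_r * t))) /\
    Rbar_le (d_r_star r (f1 t) (f2 t))
            (Rbar_mult (d_r_star r f01 f02) (exp (alpha_r * t))).
Proof.
  intros HX HY HX0 HY0 Hr MX MY _ _ _ _ K1 K2 alpha t Ht. split.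
  - unfold d_r.
    apply (sup_step _ _ (fun z => rpow (Rabs (1 - z)) r) (fun z => pgf f01 z - pgf f02 z)
             (fun z => pgf (f1 t) z - pgf (f2 t) z)).
    + apply exp_pos.
    + intros z Hz. apply rpow_pos. rewrite Rabs_pos_eq; lra.
    + intro x; tauto.
    + intro x; tauto.
    + intros K HK H0 z Hz.
      apply (core_app pX pY f01 f02 f1 f2 r (fun z => rpow (Rabs (1 - z)) r)); auto; try lra.
      intros. apply w1_ok; auto; lra.
  - unfold d_r_star.
    apply (sup_step _ _ (fun z => rpow (- ln z) r) (fun z => pgf f01 z - pgf f02 z)
             (fun z => pgf (f1 t) z - pgf (f2 t) z)).
    + apply exp_pos.
    + intros z Hz. apply rpow_pos. assert (ln z < 0) by (rewrite <- ln_1; apply ln_increasing; lra). lra.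
    + intro x. split.
      * intros [xi [Hxi ->]]. exists (exp (- xi)). 
        assert (exp (- xi) < 1) by (rewrite <- exp_0; apply exp_increasing; lra).
        pose proof (exp_pos (- xi)).
        split; [lra|]. rewrite !laplace_pgf, ln_exp, Ropp_involutive. reflexivity.
      * intros [z [Hz ->]]. exists (- ln z).
        assert (ln z < 0) by (rewrite <- ln_1; apply ln_increasing; lra).
        split; [lra|]. rewrite !laplace_pgf, Ropp_involutive, exp_ln by lra. reflexivity.
    + intro x. split.
      * intros [xi [Hxi ->]]. exists (exp (- xi)). 
        assert (exp (- xi) < 1) by (rewrite <- exp_0; apply exp_increasing; lra).
        pose proof (exp_pos (- xi)).
        split; [lra|]. rewrite !laplace_pgf, ln_exp, Ropp_involutive. reflexivity.
      * intros [z [Hz ->]]. exists (- ln z).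
        assert (ln z < 0) by (rewrite <- ln_1; apply ln_increasing; lra).
        split; [lra|]. rewrite !laplace_pgf, Ropp_involutive, exp_ln by lra. reflexivity.
    + intros K HK H0 z Hz.
      apply (core_app pX pY f01 f02 f1 f2 r (fun z => rpow (- ln z) r)); auto; try lra.
      intros. apply w2_ok; auto; lra.
Qed.
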